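(* Let $\{G(n)\}$ be a sequence of random intersection graphs with $\mathbb E\,Y(n)^2=O(1)$ and $m(n)\to\infty$. Then with probability tending to $1$, for every pair of distinct attributes $w',w''\in W$ there are at most two vertices $v$ with $\{w',w''\}\subseteq S_v$.
   Context: Random intersection graph: given positive integers $n,m$ and a probability measure $P$ on $\{0,\dots,m\}$, $G(n,m,P)$ has vertex set $V=[n]$ and attribute set $W=\{w_1,\dots,w_m\}$; independent random subsets $S_1,\dots,S_n\subseteq W$ with $\mathbb P(S_v=S)=P(|S|)/\binom{m}{|S|}$; distinct $u,v$ adjacent iff $S_u\cap S_v\ne\emptyset$. For a sequence $G(n)=G(n,m(n),P(n))$, $X(n)$ has law $P(n)$ and $Y(n)=(n/m)^{1/2}X(n)$. *)

(* Defs.v *)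
From Stdlib Require Import Reals List Arith Lia.
Import ListNotations.
Open Scope R_scope.

(* A subset of the attribute set W = {w_0,...,w_{m-1}} is encoded as a
   list of m booleans (entry i = true iff w_i belongs to the subset). *)
Fixpoint all_subsets (m : nat) : list (list bool) :=
  match m with
  | O => [[]]
  | S m' => map (cons true) (all_subsets m') ++ map (cons false) (all_subsets m')
  end.

Fixpoint all_configs (n m : nat) : list (list (list bool)) :=
  match n with
  | O => [[]]
  | S n' => flat_map (fun s => map (cons s) (all_configs n' m)) (all_subsets m)
  end.

Definition card (s : list bool) : nat := length (filter (fun b => b) s).

(* P(S_v = S) = P(|S|) / binom(m, |S|) *)
Definition subset_weight (m : nat) (P : nat -> R) (s : list bool) : R :=
  P (card s) / C m (card s).

Definition config_weight (m : nat) (P : nat -> R) (cfg : list (list bool)) : R :=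
  fold_right Rmult 1 (map (subset_weight m P) cfg).

Definition prob (n m : nat) (P : nat -> R) (E : list (list bool) -> bool) : R :=
  fold_right Rplus 0
    (map (fun cfg => if E cfg then config_weight m P cfg else 0) (all_configs n m)).

Definition pair_degree (cfg : list (list bool)) (i j : nat) : nat :=
  length (filter (fun s => andb (nth i s false) (nth j s false)) cfg).

Definition pairs_at_most_two (m : nat) (cfg : list (list bool)) : bool :=
  forallb (fun i => forallb (fun j =>
     implb (Nat.ltb i j) (Nat.leb (pair_degree cfg i j) 2)) (seq 0 m)) (seq 0 m).

Definition is_prob_on (m : nat) (P : nat -> R) : Prop :=
  (forall k, (k <= m)%nat -> 0 <= P k) /\ sum_f_R0 P m = 1.

(* E Y^2 = (n/m) E X^2, with X ~ P. *)
Definition EY2 (n m : nat) (P : nat -> R) : R :=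
  (INR n / INR m) * sum_f_R0 (fun k => INR k ^ 2 * P k) m.

(* Main.v *)
Require Import Defs.
From Stdlib Require Import Reals List Arith Lia Lra Bool.
Import ListNotations.
Open Scope R_scope.

Fixpoint cb (n k : nat) : nat :=
  match n, k with
  | _, O => 1%nat
  | O, S _ => 0%nat
  | S n', S k' => (cb n' k' + cb n' (S k'))%nat
  end.

Lemma cb_big : forall n k, (n < k)%nat -> cb n k = 0%nat.
Proof. induction n; intros [|k] H; simpl; try lia. rewrite !IHn; lia. Qed.

Lemma cb_nn : forall n, cb n n = 1%nat.
Proof. induction n; simpl; auto. rewrite IHn, cb_big; lia. Qed.

Lemma C_n0 : forall n, C n 0 = 1.
Proof. intro n. unfold C. rewrite Nat.sub_0_r. simpl. field. apply INR_fact_neq_0. Qed.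

Lemma C_nn : forall n, C n n = 1.
Proof. intro n. unfold C. rewrite Nat.sub_diag. simpl. field. apply INR_fact_neq_0. Qed.

Lemma C_cb : forall n k, (k <= n)%nat -> C n k = INR (cb n k).
Proof.
  induction n; intros [|k] H.
  - rewrite C_n0; reflexivity.
  - lia.
  - rewrite C_n0; reflexivity.
  - simpl cb. rewrite plus_INR.
    destruct (Nat.eq_dec k n) as [->|Hk].
    + rewrite C_nn, cb_nn, cb_big by lia. simpl; ring.
    + rewrite <- pascal by lia. rewrite !IHn by lia. reflexivity.
Qed.

Lemma cb_pos : forall n k, (k <= n)%nat -> (1 <= cb n k)%nat.
Proof. induction n; intros [|k] H; simpl; try lia. specialize (IHn k). lia. Qed.

Lemma pascal_sum : forall M (h : nat -> R),
  sum_f_R0 (fun k => INR (cb (S M) k) * h k) (S M) =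
  sum_f_R0 (fun k => INR (cb M k) * h (S k)) M + sum_f_R0 (fun k => INR (cb M k) * h k) M.
Proof.
  intros M h.
  rewrite decomp_sum by lia. simpl Init.Nat.pred.
  assert (E: sum_f_R0 (fun k => INR (cb M k) * h k) M =
             sum_f_R0 (fun k => INR (cb M k) * h k) (S M)).
  { rewrite tech5. cbv beta. rewrite (cb_big M (S M)) by lia. simpl; ring. }
  rewrite E, (decomp_sum _ (S M)) by lia. simpl Init.Nat.pred.
    replace (INR (cb (S M) 0) * h 0%nat) with (INR (cb M 0) * h 0%nat) by (destruct M; reflexivity).
    assert (sum_f_R0 (fun i => INR (cb (S M) (S i)) * h (S i)) M =
            sum_f_R0 (fun i => INR (cb M i) * h (S i) + INR (cb M (S i)) * h (S i)) M).
    { apply sum_eq; intros i _. simpl cb. rewrite plus_INR; ring. }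
    rewrite H, plus_sum. ring.
Qed.
Definition sumL {A} (f : A -> R) (l : list A) : R := fold_right Rplus 0 (map f l).

Lemma sumL_nil {A} (f : A -> R) : sumL f [] = 0.
Proof. reflexivity. Qed.
Lemma sumL_cons {A} (f : A -> R) a l : sumL f (a :: l) = f a + sumL f l.
Proof. reflexivity. Qed.
Lemma sumL_app {A} (f : A -> R) l1 l2 : sumL f (l1 ++ l2) = sumL f l1 + sumL f l2.
Proof. induction l1; unfold sumL in *; simpl; [ring|]. rewrite IHl1; ring. Qed.
Lemma sumL_map {A B} (f : B -> R) (g : A -> B) l : sumL f (map g l) = sumL (fun x => f (g x)) l.
Proof. unfold sumL; rewrite map_map; reflexivity. Qed.
Lemma sumL_ext {A} (f g : A -> R) l : (forall x, f x = g x) -> sumL f l = sumL g l.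
Proof. intro H; induction l; simpl; auto. unfold sumL in *; simpl; rewrite IHl, H; auto. Qed.
Lemma sumL_flat_map {A B} (f : B -> R) (g : A -> list B) l :
  sumL f (flat_map g l) = sumL (fun x => sumL f (g x)) l.
Proof. induction l; simpl; auto. rewrite sumL_app, IHl; reflexivity. Qed.
Lemma sumL_plus {A} (f g : A -> R) l : sumL (fun x => f x + g x) l = sumL f l + sumL g l.
Proof. induction l; unfold sumL in *; simpl; [ring|]. rewrite IHl; ring. Qed.
Lemma sumL_scal {A} (f : A -> R) a l : sumL (fun x => a * f x) l = a * sumL f l.
Proof. induction l; unfold sumL in *; simpl; [ring|]. rewrite IHl; ring. Qed.
Lemma sumL_zero {A} (l : list A) : sumL (fun _ => 0) l = 0.
Proof. induction l; unfold sumL in *; simpl; [ring|]. rewrite IHl; ring. Qed.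
Lemma sumL_const {A} (c : R) (l : list A) : sumL (fun _ => c) l = INR (length l) * c.
Proof. induction l. unfold sumL, card; simpl; ring. rewrite sumL_cons, IHl. simpl length. rewrite S_INR; ring. Qed.
Lemma sumL_le {A} (f g : A -> R) l : (forall x, In x l -> f x <= g x) -> sumL f l <= sumL g l.
Proof. induction l; intro H; unfold sumL in *; simpl; [lra|].
  apply Rplus_le_compat; [apply H; simpl; auto| apply IHl; intros; apply H; simpl; auto]. Qed.
Lemma sumL_nonneg {A} (f : A -> R) l : (forall x, In x l -> 0 <= f x) -> 0 <= sumL f l.
Proof. intro H. rewrite <- (sumL_zero l). apply sumL_le; auto. Qed.

Lemma all_subsets_S m : all_subsets (S m) = map (cons true) (all_subsets m) ++ map (cons false) (all_subsets m).
Proof. reflexivity. Qed.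

Lemma card_true s : card (true :: s) = S (card s). Proof. reflexivity. Qed.
Lemma card_false s : card (false :: s) = card s. Proof. reflexivity. Qed.

Lemma sum_subsets_S m (f : list bool -> R) :
  sumL f (all_subsets (S m)) = sumL (fun s => f (true :: s)) (all_subsets m) + sumL (fun s => f (false :: s)) (all_subsets m).
Proof. rewrite all_subsets_S, sumL_app, !sumL_map; reflexivity. Qed.

Lemma F_count : forall m (g : nat -> R),
  sumL (fun s => g (card s)) (all_subsets m) = sum_f_R0 (fun k => INR (cb m k) * g k) m.
Proof.
  induction m; intro g.
  - unfold sumL, card; simpl; ring.
  - rewrite sum_subsets_S. cbv beta.
    rewrite (sumL_ext (fun s => g (card (true::s))) (fun s => g (S (card s)))) by reflexivity.
    rewrite (sumL_ext (fun s => g (card (false::s))) (fun s => g (card s))) by reflexivity.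
    rewrite (IHm (fun k => g (S k))), IHm, pascal_sum. reflexivity.
Qed.

Lemma sum_subsets_S' m (f : list bool -> nat -> R) :
  sumL (fun s => f s (card s)) (all_subsets (S m)) =
  sumL (fun s => f (true::s) (S (card s))) (all_subsets m) + sumL (fun s => f (false::s) (card s)) (all_subsets m).
Proof. rewrite sum_subsets_S. reflexivity. Qed.

Lemma G_count : forall m j (g : nat -> R), (j < S m)%nat ->
  sumL (fun s => if nth j s false then g (card s) else 0) (all_subsets (S m)) =
  sum_f_R0 (fun k => INR (cb m k) * g (S k)) m.
Proof.
  induction m; intros j g Hj;
  (etransitivity; [apply (sum_subsets_S' _ (fun s c => if nth j s false then g c else 0))|]); cbv beta.
  - destruct j; [|lia]. simpl nth. rewrite sumL_zero, (F_count 0 (fun k => g (S k))). ring.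
  - destruct j.
    + simpl nth. rewrite sumL_zero, (F_count (S m) (fun k => g (S k))). ring.
    + simpl nth.
      rewrite (IHm j (fun k => g (S k))) by lia. rewrite (IHm j g) by lia.
      rewrite (pascal_sum m (fun k => g (S k))). reflexivity.
Qed.

Lemma H_count : forall m i j (g : nat -> R), (i < j)%nat -> (j < S (S m))%nat ->
  sumL (fun s => if andb (nth i s false) (nth j s false) then g (card s) else 0) (all_subsets (S (S m))) =
  sum_f_R0 (fun k => INR (cb m k) * g (S (S k))) m.
Proof.
  induction m; intros i j g Hij Hj;
  (etransitivity; [apply (sum_subsets_S' _ (fun s c => if andb (nth i s false) (nth j s false) then g c else 0))|]); cbv beta.
  - destruct i; [|lia]. destruct j; [lia|]. simpl nth. simpl andb.
    rewrite sumL_zero. rewrite (G_count 0 j (fun k => g (S k))) by lia. ring.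
  - destruct i; destruct j; try lia.
    + simpl nth. simpl andb.
      rewrite sumL_zero. rewrite (G_count (S m) j (fun k => g (S k))) by lia. ring.
    + simpl nth.
      rewrite (IHm i j (fun k => g (S k))) by lia. rewrite (IHm i j g) by lia.
      rewrite (pascal_sum m (fun k => g (S (S k)))). reflexivity.
Qed.

Lemma prob_sumL n m P E : prob n m P E =
  sumL (fun cfg => if E cfg then config_weight m P cfg else 0) (all_configs n m).
Proof. reflexivity. Qed.

Lemma in_subsets_card : forall m s, In s (all_subsets m) -> (card s <= m)%nat.
Proof.
  induction m; intros s H.
  - simpl in H. destruct H as [<-|[]]. unfold card; simpl; lia.
  - rewrite all_subsets_S in H. apply in_app_or in H.
    destruct H as [H|H]; apply in_map_iff in H; destruct H as [s' [<- H]].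
    + rewrite card_true. specialize (IHm s' H). lia.
    + rewrite card_false. specialize (IHm s' H). lia.
Qed.

Lemma C_pos m k : (k <= m)%nat -> 0 < C m k.
Proof. intro H. rewrite C_cb by auto. apply lt_0_INR. pose proof (cb_pos m k H). lia. Qed.

Lemma w_nonneg m P s : is_prob_on m P -> In s (all_subsets m) -> 0 <= subset_weight m P s.
Proof.
  intros [HP _] Hs. apply in_subsets_card in Hs. unfold subset_weight.
  apply Rmult_le_pos; [apply HP; auto|]. left; apply Rinv_0_lt_compat, C_pos; auto.
Qed.

Lemma cw_nonneg : forall n m P c, is_prob_on m P -> In c (all_configs n m) -> 0 <= config_weight m P c.
Proof.
  induction n; intros m P c HP H.
  - simpl in H. destruct H as [<-|[]]. unfold config_weight; simpl; lra.
  - simpl in H. apply in_flat_map in H. destruct H as [s [Hs H]].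
    apply in_map_iff in H. destruct H as [c' [<- Hc]].
    unfold config_weight; simpl. fold (config_weight m P c').
    apply Rmult_le_pos; [apply w_nonneg|apply IHn]; auto.
Qed.

Lemma total_subsets m P : is_prob_on m P -> sumL (subset_weight m P) (all_subsets m) = 1.
Proof.
  intros HP.
  transitivity (sumL (fun s => (fun k => P k / C m k) (card s)) (all_subsets m)); [reflexivity|].
  rewrite (F_count m (fun k => P k / C m k)). destruct HP as [_ HP]. rewrite <- HP. apply sum_eq. intros k Hk.
  rewrite C_cb by auto. field. apply not_0_INR. pose proof (cb_pos m k Hk). lia.
Qed.

Lemma prob_S n m P E : prob (S n) m P E =
  sumL (fun s => subset_weight m P s * prob n m P (fun c => E (s::c))) (all_subsets m).
Proof.
  rewrite prob_sumL. change (all_configs (S n) m) with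
    (flat_map (fun s => map (cons s) (all_configs n m)) (all_subsets m)).
  rewrite sumL_flat_map. apply sumL_ext. intro s. rewrite sumL_map, prob_sumL, <- sumL_scal.
  apply sumL_ext. intro c. unfold config_weight at 1. simpl. fold (config_weight m P c).
  destruct (E (s :: c)); ring.
Qed.

Lemma prob_ext n m P E E' : (forall c, E c = E' c) -> prob n m P E = prob n m P E'.
Proof. intro H. rewrite !prob_sumL. apply sumL_ext. intro c. rewrite H. auto. Qed.

Lemma prob_le n m P E E' : is_prob_on m P -> (forall c, E c = true -> E' c = true) -> prob n m P E <= prob n m P E'.
Proof.
  intros HP H. rewrite !prob_sumL. apply sumL_le. intros c Hc.
  pose proof (cw_nonneg n m P c HP Hc). specialize (H c).
  destruct (E c); [rewrite H; auto; lra|]. destruct (E' c); lra.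
Qed.

Lemma prob_nonneg n m P E : is_prob_on m P -> 0 <= prob n m P E.
Proof.
  intros HP. rewrite prob_sumL. apply sumL_nonneg. intros c Hc.
  pose proof (cw_nonneg n m P c HP Hc). destruct (E c); lra.
Qed.

Lemma prob_or n m P E1 E2 : is_prob_on m P ->
  prob n m P (fun c => orb (E1 c) (E2 c)) <= prob n m P E1 + prob n m P E2.
Proof.
  intros HP. rewrite !prob_sumL, <- sumL_plus. apply sumL_le. intros c Hc.
  pose proof (cw_nonneg n m P c HP Hc). destruct (E1 c), (E2 c); simpl; lra.
Qed.

Lemma prob_false n m P : prob n m P (fun _ => false) = 0.
Proof. rewrite prob_sumL. apply sumL_zero. Qed.

Lemma prob_total : forall n m P, is_prob_on m P -> prob n m P (fun _ => true) = 1.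
Proof.
  induction n; intros m P HP.
  - unfold prob, config_weight; simpl; ring.
  - rewrite prob_S. rewrite (sumL_ext _ (fun s => subset_weight m P s * 1)).
    + rewrite (sumL_ext _ (fun s => subset_weight m P s)) by (intro; ring).
      apply total_subsets; auto.
    + intro s. rewrite IHn; auto.
Qed.

Lemma prob_compl n m P E : is_prob_on m P ->
  prob n m P E = 1 - prob n m P (fun c => negb (E c)).
Proof.
  intros HP. rewrite <- (prob_total n m P HP), !prob_sumL.
  assert (sumL (fun cfg : list (list bool) => if true then config_weight m P cfg else 0) (all_configs n m)
    = sumL (fun cfg => if E cfg then config_weight m P cfg else 0) (all_configs n m) +
      sumL (fun cfg => if negb (E cfg) then config_weight m P cfg else 0) (all_configs n m)).
  { rewrite <- sumL_plus. apply sumL_ext. intro c. destruct (E c); simpl; ring. }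
  rewrite H. ring.
Qed.

Lemma prob_existsb {A} n m P (E : A -> list (list bool) -> bool) l : is_prob_on m P ->
  prob n m P (fun c => existsb (fun x => E x c) l) <= sumL (fun x => prob n m P (E x)) l.
Proof.
  intros HP. induction l.
  - simpl. rewrite prob_false, sumL_nil. lra.
  - simpl existsb. rewrite sumL_cons. eapply Rle_trans; [apply prob_or; auto|]. lra.
Qed.

Definition qv (i j : nat) (s : list bool) : bool := andb (nth i s false) (nth j s false).

Lemma pd_cons s c i j : pair_degree (s :: c) i j =
  if qv i j s then S (pair_degree c i j) else pair_degree c i j.
Proof. unfold pair_degree, qv. simpl. destruct (andb (nth i s false) (nth j s false)); reflexivity. Qed.

Definition pv m P i j := sumL (fun s => if qv i j s then subset_weight m P s else 0) (all_subsets m).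

Lemma pv_nonneg m P i j : is_prob_on m P -> 0 <= pv m P i j.
Proof. intros HP. apply sumL_nonneg. intros s Hs. pose proof (w_nonneg m P s HP Hs). destruct (qv i j s); lra. Qed.

Lemma pow_step x p r : 0 <= x -> 0 <= p -> p * x ^ r + x ^ (S r) <= (x + p) ^ (S r).
Proof.
  intros Hx Hp. simpl. assert (x ^ r <= (x + p) ^ r) by (apply pow_incr; lra).
  assert (0 <= x ^ r) by (apply pow_le; auto). nra.
Qed.

Lemma tail_bound : forall n m P i j r, is_prob_on m P ->
  prob n m P (fun c => Nat.leb r (pair_degree c i j)) <= (INR n * pv m P i j) ^ r.
Proof.
  induction n; intros m P i j r HP.
  - unfold prob, config_weight. simpl. destruct r; simpl; lra.
  - destruct r.
    + simpl pow. rewrite (prob_ext _ _ _ _ (fun _ => true)) by reflexivity. rewrite prob_total; auto; lra.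
    + rewrite prob_S.
      set (a := prob n m P (fun c => Nat.leb r (pair_degree c i j))).
      set (b := prob n m P (fun c => Nat.leb (S r) (pair_degree c i j))).
      assert (Ha: 0 <= a) by (apply prob_nonneg; auto).
      assert (Hb: 0 <= b) by (apply prob_nonneg; auto).
      eapply Rle_trans with (sumL (fun s => (if qv i j s then subset_weight m P s else 0) * a + subset_weight m P s * b) (all_subsets m)).
      { apply sumL_le. intros s Hs. pose proof (w_nonneg m P s HP Hs).
        rewrite (prob_ext _ _ _ _ (fun c => if qv i j s then Nat.leb r (pair_degree c i j) else Nat.leb (S r) (pair_degree c i j))).
        2:{ intro c. rewrite pd_cons. destruct (qv i j s); reflexivity. }
        destruct (qv i j s).
        - fold a. nra.
        - fold b. lra. }
      rewrite sumL_plus. rewrite (sumL_ext (fun s => (if qv i j s then subset_weight m P s else 0) * a) (fun s => a * (if qv i j s then subset_weight m P s else 0))) by (intro; ring).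
      rewrite (sumL_ext (fun s => subset_weight m P s * b) (fun s => b * subset_weight m P s)) by (intro; ring).
      rewrite !sumL_scal. fold (pv m P i j). rewrite total_subsets by auto.
      pose proof (IHn m P i j r HP) as H1. pose proof (IHn m P i j (S r) HP) as H2. fold a in H1. fold b in H2.
      pose proof (pv_nonneg m P i j HP) as Hp.
      assert (0 <= INR n * pv m P i j) by (apply Rmult_le_pos; auto; apply pos_INR).
      rewrite S_INR. replace ((INR n + 1) * pv m P i j) with (INR n * pv m P i j + pv m P i j) by ring.
      eapply Rle_trans; [|apply pow_step; auto].
      assert (pv m P i j * a <= pv m P i j * (INR n * pv m P i j) ^ r) by (apply Rmult_le_compat_l; auto).
      lra.
Qed.

Lemma ratio M k : (k <= M)%nat ->
  INR (cb M k) / C (S (S M)) (S (S k)) = INR (S (S k)) * INR (S k) / (INR (S (S M)) * INR (S M)).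
Proof.
  intro H. rewrite <- C_cb by auto. unfold C.
  replace (S (S M) - S (S k))%nat with (M - k)%nat by lia.
  rewrite !fact_simpl, !mult_INR.
  pose proof (INR_fact_neq_0 M). pose proof (INR_fact_neq_0 k). pose proof (INR_fact_neq_0 (M-k)).
  assert (INR (S M) <> 0) by (apply not_0_INR; lia).
  assert (INR (S (S M)) <> 0) by (apply not_0_INR; lia).
  assert (INR (S k) <> 0) by (apply not_0_INR; lia).
  assert (INR (S (S k)) <> 0) by (apply not_0_INR; lia).
  field. repeat split; auto.
Qed.

Lemma sum_shift2 f : forall n, sum_f_R0 f (S (S n)) = f 0%nat + f 1%nat + sum_f_R0 (fun k => f (S (S k))) n.
Proof. induction n. simpl; ring. rewrite tech5, IHn, tech5. ring. Qed.

Lemma pv_bound M P i j : is_prob_on (S (S M)) P -> (i < j)%nat -> (j < S (S M))%nat ->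
  pv (S (S M)) P i j * (INR (S (S M)) * INR (S M)) <= sum_f_R0 (fun k => INR k ^ 2 * P k) (S (S M)).
Proof.
  intros HP Hij Hj.
  assert (E: pv (S (S M)) P i j = sum_f_R0 (fun k => INR (cb M k) * (P (S (S k)) / C (S (S M)) (S (S k)))) M).
  { transitivity (sumL (fun s => if andb (nth i s false) (nth j s false) then
        (fun k => P k / C (S (S M)) k) (card s) else 0) (all_subsets (S (S M)))); [reflexivity|].
    rewrite (H_count M i j (fun k => P k / C (S (S M)) k)) by auto. reflexivity. }
  rewrite E, Rmult_comm, scal_sum, sum_shift2.
  destruct HP as [HP _].
  assert (0 <= INR 0 ^ 2 * P 0%nat) by (apply Rmult_le_pos; [apply pow_le, pos_INR| apply HP; lia]).
  assert (0 <= INR 1 ^ 2 * P 1%nat) by (apply Rmult_le_pos; [apply pow_le, pos_INR| apply HP; lia]).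
  cut (sum_f_R0 (fun i0 => INR (cb M i0) * (P (S (S i0)) / C (S (S M)) (S (S i0))) * (INR (S (S M)) * INR (S M))) M
      <= sum_f_R0 (fun k => INR (S (S k)) ^ 2 * P (S (S k))) M); [lra|].
  apply sum_Rle. intros k Hk.
  replace (INR (cb M k) * (P (S (S k)) / C (S (S M)) (S (S k))) * (INR (S (S M)) * INR (S M)))
    with (P (S (S k)) * (INR (cb M k) / C (S (S M)) (S (S k))) * (INR (S (S M)) * INR (S M))) by (unfold Rdiv; ring).
  rewrite ratio by auto.
  assert (INR (S M) <> 0) by (apply not_0_INR; lia).
  assert (INR (S (S M)) <> 0) by (apply not_0_INR; lia).
  replace (P (S (S k)) * (INR (S (S k)) * INR (S k) / (INR (S (S M)) * INR (S M))) * (INR (S (S M)) * INR (S M)))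
    with (P (S (S k)) * (INR (S (S k)) * INR (S k))) by (field; auto).
  assert (0 <= P (S (S k))) by (apply HP; lia).
  rewrite (S_INR (S k)). pose proof (pos_INR (S k)). nra.
Qed.

Lemma negb_forallb {A} (f : A -> bool) l : negb (forallb f l) = existsb (fun x => negb (f x)) l.
Proof. induction l; simpl; auto. rewrite negb_andb, IHl. reflexivity. Qed.

Lemma existsb_ext' {A} (f g : A -> bool) l : (forall x, f x = g x) -> existsb f l = existsb g l.
Proof. intro H; induction l; simpl; auto. rewrite H, IHl; auto. Qed.

Lemma npv_bound n M P K i j : is_prob_on (S (S M)) P -> (i < j)%nat -> (j < S (S M))%nat ->
  EY2 n (S (S M)) P <= K -> INR n * pv (S (S M)) P i j <= K / INR (S M).
Proof.
  intros HP Hij Hj HK.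
  pose proof (pv_bound M P i j HP Hij Hj) as Hb. unfold EY2 in HK.
  set (E2 := sum_f_R0 (fun k => INR k ^ 2 * P k) (S (S M))) in *.
  set (p := pv (S (S M)) P i j) in *.
  assert (Hp: 0 <= p) by (apply pv_nonneg; auto).
  assert (Hx: 0 < INR (S M)) by (apply lt_0_INR; lia).
  assert (Hy: 0 < INR (S (S M))) by (apply lt_0_INR; lia).
  pose proof (pos_INR n) as Ha.
  apply (Rmult_le_reg_r (INR (S M))); auto.
  replace (K / INR (S M) * INR (S M)) with K by (field; lra).
  assert (0 <= INR n / INR (S (S M))) by (unfold Rdiv; apply Rmult_le_pos; [lra| left; apply Rinv_0_lt_compat; lra]).
  replace (INR n * p * INR (S M)) with (INR n / INR (S (S M)) * (p * (INR (S (S M)) * INR (S M)))) by (field; lra).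
  eapply Rle_trans; [|apply HK]. apply Rmult_le_compat_l; auto.
Qed.

Lemma main_bound n M P K : is_prob_on (S (S M)) P -> EY2 n (S (S M)) P <= K -> 0 <= K ->
  1 - INR (S (S M)) * (INR (S (S M)) * (K / INR (S M)) ^ 3) <= prob n (S (S M)) P (pairs_at_most_two (S (S M))).
Proof.
  intros HP HK HK0. set (mm := S (S M)).
  set (Bd := (K / INR (S M)) ^ 3).
  assert (HBd: 0 <= Bd).
  { apply pow_le. unfold Rdiv. apply Rmult_le_pos; auto. left; apply Rinv_0_lt_compat, lt_0_INR; lia. }
  rewrite prob_compl by auto.
  cut (prob n mm P (fun c => negb (pairs_at_most_two mm c)) <= INR mm * (INR mm * Bd)); [lra|].
  unfold pairs_at_most_two.
  rewrite (prob_ext _ _ _ _ (fun c => existsb (fun i => existsb (fun j =>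
      negb (implb (Nat.ltb i j) (Nat.leb (pair_degree c i j) 2))) (seq 0 mm)) (seq 0 mm))).
  2:{ intro c. rewrite negb_forallb. apply existsb_ext'. intro i. apply negb_forallb. }
  eapply Rle_trans; [apply (prob_existsb n mm P (fun i c => existsb (fun j =>
      negb (implb (Nat.ltb i j) (Nat.leb (pair_degree c i j) 2))) (seq 0 mm)) (seq 0 mm) HP)|].
  replace (INR mm * (INR mm * Bd)) with (sumL (fun _ => sumL (fun _ => Bd) (seq 0 mm)) (seq 0 mm))
    by (rewrite !sumL_const, length_seq; ring).
  apply sumL_le; intros i Hi.
  eapply Rle_trans; [apply (prob_existsb n mm P (fun j c =>
      negb (implb (Nat.ltb i j) (Nat.leb (pair_degree c i j) 2))) (seq 0 mm) HP)|].
  apply sumL_le; intros j Hj. apply in_seq in Hi, Hj.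
  destruct (Nat.ltb_spec i j).
  - eapply Rle_trans; [apply (prob_le _ _ _ _ (fun c => Nat.leb 3 (pair_degree c i j))); auto|].
    { intros c. simpl implb. destruct (Nat.leb_spec (pair_degree c i j) 2); cbn [negb]; intro; [discriminate| apply (proj2 (Nat.leb_le 3 (pair_degree c i j))); lia]. }
    eapply Rle_trans; [apply tail_bound; auto|]. unfold Bd. apply pow_incr. split.
    + apply Rmult_le_pos; [apply pos_INR| apply pv_nonneg; auto].
    + apply npv_bound; auto; unfold mm in Hj; lia.
  - rewrite (prob_ext _ _ _ _ (fun _ => false)), prob_false; auto.
    all: try (intro c; destruct (Nat.ltb_spec i j); [lia|]; reflexivity).
Qed.

Lemma final_arith (x K eps : R) : 1 <= x -> 0 <= K -> 0 < eps -> x > 4 * K ^ 3 / eps ->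
  (x + 1) * ((x + 1) * (K / x) ^ 3) < eps.
Proof.
  intros Hx HK He Hxe.
  set (z := (K / x) ^ 3).
  assert (Hz: 0 <= z) by (apply pow_le; unfold Rdiv; apply Rmult_le_pos; [lra| left; apply Rinv_0_lt_compat; lra]).
  assert (Hy: K ^ 3 = z * (x * x * x)) by (unfold z; field; lra).
  assert (H1: 4 * K ^ 3 < eps * x).
  { apply (Rmult_lt_compat_l eps) in Hxe; auto.
    replace (eps * (4 * K ^ 3 / eps)) with (4 * K ^ 3) in Hxe by (field; lra). lra. }
  rewrite Hy in H1.
  assert (H2: 4 * x * x * z < eps).
  { apply (Rmult_lt_reg_r x); [lra|]. nra. }
  assert ((x + 1) * (x + 1) <= 4 * x * x) by nra.
  nra.
Qed.

Theorem mainTheorem17 (m : nat -> nat) (P : nat -> nat -> R)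
  (Hm_pos : forall n, (1 <= m n)%nat)
  (HP : forall n, is_prob_on (m n) (P n))
  (HY2 : exists K N, forall n, (N <= n)%nat -> EY2 n (m n) (P n) <= K)
  (Hm_inf : forall M, exists N, forall n, (N <= n)%nat -> (M <= m n)%nat) :
  Un_cv (fun n => prob n (m n) (P n) (pairs_at_most_two (m n))) 1.
Proof.
  destruct HY2 as [K [N HK]].
  set (K' := Rabs K).
  assert (HK' : 0 <= K') by apply Rabs_pos.
  intros eps Heps.
  destruct (INR_unbounded (4 * K' ^ 3 / eps + 2)) as [M0 HM0].
  destruct (Hm_inf M0) as [N1 HN1].
  exists (Nat.max N N1). intros n Hn.
  assert (HmM: (M0 <= m n)%nat) by (apply HN1; lia).
  assert (Hq: 0 <= 4 * K' ^ 3 / eps).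
  { unfold Rdiv. apply Rmult_le_pos; [apply Rmult_le_pos; [lra| apply pow_le; auto]| left; apply Rinv_0_lt_compat; lra]. }
  assert (HM0' : INR M0 <= INR (m n)) by (apply le_INR; auto).
  destruct (m n) as [|[|M]] eqn:Em.
  - simpl in HM0'. lra.
  - simpl in HM0'. lra.
  - pose proof (HP n) as HPn. rewrite Em in HPn.
    assert (HE : EY2 n (S (S M)) (P n) <= K').
    { rewrite <- Em. eapply Rle_trans; [apply HK; lia| apply Rle_abs]. }
    pose proof (main_bound n M (P n) K' HPn HE HK') as Hlow.
    assert (Hup: prob n (S (S M)) (P n) (pairs_at_most_two (S (S M))) <= 1).
    { rewrite <- (prob_total n (S (S M)) (P n) HPn). apply prob_le; auto. }
    assert (Hx: INR (S (S M)) = INR (S M) + 1) by apply S_INR.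
    assert (Hb: INR (S (S M)) * (INR (S (S M)) * (K' / INR (S M)) ^ 3) < eps).
    { rewrite Hx. apply final_arith; auto; lra. }
    unfold R_dist. rewrite Rabs_left1 by lra. lra.
Qed.
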